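(* Let $\tau$ be a $\sigma$-maxitive measure on a $\sigma$-algebra $\mathcal{B}$ on a nonempty set $E$. The following conditions are equivalent: 1. $\tau$ is $\sigma$-principal; 2. $\tau$ satisfies the countable chain condition; 3. the quotient space $\mathcal{B}/\tau$ is $\sigma$-principal, i.e. every $\sigma$-ideal of the $\sigma$-complete lattice $\mathcal{B}/\tau$ is a principal ideal; 4. there is a $\sigma$-principal $\sigma$-additive measure $m$ on $\mathcal{B}$ such that, for all $B\in\mathcal{B}$, $m(B)=0$ if and only if $\tau(B)=0$.
   Context: A $\sigma$-maxitive measure on $\mathcal{B}$ is a map $\tau:\mathcal{B}\to[0,\infty]$ with $\tau(\emptyset)=0$ and $\tau(\bigcup_j B_j)=\sup_j\tau(B_j)$ for every countable family $(B_j)$ in $\mathcal{B}$. A set $N\subset E$ is $\tau$-negligible if $N\subset B$ for some $B\in\mathcal{B}$ with $\tau(B)=0$; analogously for $m$. A $\sigma$-ideal of $\mathcal{B}$ is a nonempty subfamily closed under countable unions and such that $A\subset B\in\mathcal{I}$ with $A\in\mathcal{B}$ implies $A\in\mathcal{I}$. A monotone set function $\mu$ on $\mathcal{B}$ is $\sigma$-principal if for every $\sigma$-ideal $\mathcal{I}$ of $\mathcal{B}$ there is $L\in\mathcal{I}$ such that $S\setminus L$ is $\mu$-negligible for all $S\in\mathcal{I}$. $\tau$ satisfies the countable chain condition if every family of pairwise disjoint, non-$\tau$-negligible elements of $\mathcal{B}$ is countable. Quotient space: on $\mathcal{B}$ put $A\sim B$ if $A\cup N=B\cup N$ for some $\tau$-negligible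 $N$. Write $B^\tau$ for the class of $B$ and $\mathcal{B}/\tau$ for the set of classes, ordered by $A^\tau\le B^\tau$ iff $A\subset B\cup N$ for some $\tau$-negligible $N$; this is a $\sigma$-complete lattice. A $\sigma$-ideal of $\mathcal{B}/\tau$ is a nonempty down-closed subset closed under countable suprema. It is principal if it equals $\{x: x\le L^\tau\}$ for some $L$. *)

(* Defs.v *)
From Stdlib Require Import Reals.
Open Scope R_scope.
Set Implicit Arguments.

(** Extended nonnegative-valued reals [0, oo] (nonnegativity is imposed
    separately on the set functions). *)
Inductive ereal : Type := EFin (r : R) | EInf.

Definition ele (a b : ereal) : Prop :=
  match a, b with
  | EFin x, EFin y => x <= y
  | _, EInf => True
  | EInf, EFin _ => False
  end.

Definition eadd (a b : ereal) : ereal :=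
  match a, b with
  | EFin x, EFin y => EFin (x + y)
  | _, _ => EInf
  end.

Definition ezero : ereal := EFin 0.

Definition is_esup (f : nat -> ereal) (s : ereal) : Prop :=
  (forall n, ele (f n) s) /\ (forall u, (forall n, ele (f n) u) -> ele s u).

Fixpoint epsum (f : nat -> ereal) (n : nat) : ereal :=
  match n with
  | O => ezero
  | S k => eadd (epsum f k) (f k)
  end.

Definition is_esum (f : nat -> ereal) (s : ereal) : Prop := is_esup (epsum f) s.

Definition set0 {E : Type} : E -> Prop := fun _ => False.
Definition bigcup {E : Type} (F : nat -> E -> Prop) : E -> Prop :=
  fun x => exists n, F n x.
Definition subset {E : Type} (A C : E -> Prop) : Prop := forall x, A x -> C x.

Definition sigma_algebra {E : Type} (B : (E -> Prop) -> Prop) : Prop :=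
  B set0 /\
  (forall A, B A -> B (fun x => ~ A x)) /\
  (forall F : nat -> E -> Prop, (forall n, B (F n)) -> B (bigcup F)).

Definition sigma_maxitive {E : Type} (B : (E -> Prop) -> Prop)
  (tau : (E -> Prop) -> ereal) : Prop :=
  tau set0 = ezero /\
  (forall A, B A -> ele ezero (tau A)) /\
  (forall F : nat -> E -> Prop, (forall n, B (F n)) ->
     is_esup (fun n => tau (F n)) (tau (bigcup F))).

Definition sigma_additive {E : Type} (B : (E -> Prop) -> Prop)
  (m : (E -> Prop) -> ereal) : Prop :=
  m set0 = ezero /\
  (forall A, B A -> ele ezero (m A)) /\
  (forall F : nat -> E -> Prop, (forall n, B (F n)) ->
     (forall i j, i <> j -> forall x, ~ (F i x /\ F j x)) ->
     is_esum (fun n => m (F n)) (m (bigcup F))).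

Definition negligible {E : Type} (B : (E -> Prop) -> Prop)
  (mu : (E -> Prop) -> ereal) (N : E -> Prop) : Prop :=
  exists C, B C /\ subset N C /\ mu C = ezero.

Definition sigma_ideal {E : Type} (B : (E -> Prop) -> Prop)
  (I : (E -> Prop) -> Prop) : Prop :=
  (forall A, I A -> B A) /\
  (exists A, I A) /\
  (forall F : nat -> E -> Prop, (forall n, I (F n)) -> I (bigcup F)) /\
  (forall A C, B A -> subset A C -> I C -> I A).

Definition sigma_principal {E : Type} (B : (E -> Prop) -> Prop)
  (mu : (E -> Prop) -> ereal) : Prop :=
  forall I, sigma_ideal B I ->
    exists L, I L /\
      forall S, I S -> negligible B mu (fun x => S x /\ ~ L x).

Definition countable_family {E : Type} (Fam : (E -> Prop) -> Prop) : Prop :=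
  exists g : nat -> (E -> Prop), forall A, Fam A -> exists n, g n = A.

Definition ccc {E : Type} (B : (E -> Prop) -> Prop)
  (tau : (E -> Prop) -> ereal) : Prop :=
  forall Fam : (E -> Prop) -> Prop,
    (forall A, Fam A -> B A /\ ~ negligible B tau A) ->
    (forall A C, Fam A -> Fam C -> A <> C -> forall x, ~ (A x /\ C x)) ->
    countable_family Fam.

Definition tequiv {E : Type} (B : (E -> Prop) -> Prop)
  (tau : (E -> Prop) -> ereal) (A C : E -> Prop) : Prop :=
  exists N, negligible B tau N /\ forall x, (A x \/ N x) <-> (C x \/ N x).

Definition tcls {E : Type} (B : (E -> Prop) -> Prop)
  (tau : (E -> Prop) -> ereal) (A : E -> Prop) : (E -> Prop) -> Prop :=
  fun C => B C /\ tequiv B tau A C.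

Definition quot {E : Type} (B : (E -> Prop) -> Prop)
  (tau : (E -> Prop) -> ereal) : Type :=
  { P : (E -> Prop) -> Prop | exists A, B A /\ P = tcls B tau A }.

Definition qle {E : Type} {B : (E -> Prop) -> Prop}
  {tau : (E -> Prop) -> ereal} (p q : quot B tau) : Prop :=
  exists A C, proj1_sig p A /\ proj1_sig q C /\
    exists N, negligible B tau N /\ forall x, A x -> C x \/ N x.

Definition is_lub_seq {T : Type} (le : T -> T -> Prop) (f : nat -> T) (s : T) : Prop :=
  (forall n, le (f n) s) /\ (forall u, (forall n, le (f n) u) -> le s u).

Definition order_sigma_ideal {T : Type} (le : T -> T -> Prop) (I : T -> Prop) : Prop :=
  (exists x, I x) /\
  (forall x y, le x y -> I y -> I x) /\
  (forall (f : nat -> T) s, (forall n, I (f n)) -> is_lub_seq le f s -> I s).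

Definition order_principal {T : Type} (le : T -> T -> Prop) (I : T -> Prop) : Prop :=
  exists l, forall x, I x <-> le x l.

Definition quot_sigma_principal {E : Type} (B : (E -> Prop) -> Prop)
  (tau : (E -> Prop) -> ereal) : Prop :=
  forall I : quot B tau -> Prop,
    order_sigma_ideal (@qle E B tau) I -> order_principal (@qle E B tau) I.

(* Main.v *)
Require Import Defs.
From Stdlib Require Import Reals ClassicalEpsilon FunctionalExtensionality PropExtensionality Classical Cantor Lra.
From mathcomp Require classical_sets.

Lemma myZorn (T:Type) (P : (T->Prop)->Prop) :
  (forall F : (T->Prop)->Prop, (forall X, F X -> P X) ->
     (forall X Y, F X -> F Y -> (forall t, X t -> Y t) \/ (forall t, Y t -> X t)) ->
     P (fun t => exists X, F X /\ X t)) ->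
  exists A, P A /\ forall C, (forall t, A t -> C t) -> ~ (forall t, C t -> A t) -> ~ P C.
Proof.
  intros H.
  destruct (@classical_sets.Zorn_bigcup T P) as [A [PA HA]].
  - intros F HF Htot.
    assert (Hq : (classical_sets.bigcup F (fun X => X)) = (fun t => exists X, F X /\ X t)).
    { apply functional_extensionality. intro t. apply propositional_extensionality. split.
      - intros [X a b]. exists X; auto.
      - intros [X [a b]]. exists X; auto. }
    unfold classical_sets.bigcup in *.
    rewrite Hq. apply H. exact HF. exact Htot.
  - exists A. split. exact PA. intros C h1 h2 h3. apply (HA C). split. exact h1. exact h2. exact h3.
Qed.

Lemma cchoice (X : Type) (P : nat -> X -> Prop) :
  (forall n, exists x, P n x) -> exists g : nat -> X, forall n, P n (g n).
Proof.
  intros H. exists (fun n => proj1_sig (constructive_indefinite_description _ (H n))).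
  intro n. exact (proj2_sig (constructive_indefinite_description _ (H n))).
Qed.

Lemma esup_zero (f : nat -> ereal) s :
  is_esup f s -> (forall n, f n = ezero) -> s = ezero.
Proof.
  intros [H1 H2] Hf.
  assert (a : ele s ezero). { apply H2. intro n. rewrite Hf. simpl. lra. }
  assert (b : ele ezero s). { rewrite <- (Hf 0%nat). apply H1. }
  destruct s; simpl in *; [|contradiction]. unfold ezero. f_equal. lra.
Qed.

Lemma esup_le (f : nat -> ereal) s n : is_esup f s -> s = ezero ->
  (forall n, ele ezero (f n)) -> f n = ezero.
Proof.
  intros [H1 _] Hs Hp. specialize (H1 n). specialize (Hp n). rewrite Hs in H1.
  destruct (f n); simpl in *; [|contradiction]. unfold ezero. f_equal. lra.
Qed.

Lemma B_ext {E} (B : (E -> Prop) -> Prop) A C : B A -> (forall x, A x <-> C x) -> B C.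
Proof.
  intros HA H. replace C with A; auto. apply functional_extensionality. intro x.
  apply propositional_extensionality. auto.
Qed.

Lemma B_diff {E} (B : (E -> Prop) -> Prop) A C : sigma_algebra B -> B A -> B C ->
  B (fun x => A x /\ ~ C x).
Proof.
  intros [H0 [Hc Hu]] HA HC.
  set (F := fun n : nat => match n with O => (fun x => ~ A x) | _ => C end).
  assert (HF : B (bigcup F)). { apply Hu. intros [|n]; simpl; auto. }
  apply Hc in HF. apply (B_ext B _ _ HF). intro x. unfold bigcup, F. split.
  - intro h. split.
    + apply NNPP. intro h1. apply h. exists 0%nat. exact h1.
    + intro h1. apply h. exists 1%nat. exact h1.
  - intros [h1 h2] [[|n] h]; auto.
Qed.

Lemma neg_sub {E} (B : (E -> Prop) -> Prop) mu N M :
  (forall x, N x -> M x) -> negligible B mu M -> negligible B mu N.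
Proof. intros H [C [a [b c]]]. exists C. unfold subset in *. auto. Qed.

Lemma neg_bigcup {E} (B : (E -> Prop) -> Prop) tau (N : nat -> E -> Prop) :
  sigma_algebra B -> sigma_maxitive B tau ->
  (forall n, negligible B tau (N n)) -> negligible B tau (bigcup N).
Proof.
  intros HB [_ [_ Ht]] HN.
  destruct (@cchoice _ (fun n (C : E -> Prop) => B C /\ subset (N n) C /\ tau C = ezero) HN) as [g Hg].
  exists (bigcup g). destruct HB as [_ [_ Hu]].
  assert (Bg : forall n, B (g n)) by (intro n; apply Hg).
  split; [apply Hu; exact Bg|]. split.
  - intros x [n h]. exists n. apply (proj1 (proj2 (Hg n))). exact h.
  - apply (esup_zero _ _ (Ht g Bg)). intro n. apply Hg.
Qed.

Lemma neg_union {E} (B : (E -> Prop) -> Prop) tau N1 N2 :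
  sigma_algebra B -> sigma_maxitive B tau ->
  negligible B tau N1 -> negligible B tau N2 -> negligible B tau (fun x => N1 x \/ N2 x).
Proof.
  intros HB Ht H1 H2.
  apply (neg_sub _ _ _ (bigcup (fun n => match n with O => N1 | _ => N2 end))).
  - intros x [h|h]; [exists 0%nat|exists 1%nat]; exact h.
  - apply neg_bigcup; auto. intros [|n]; auto.
Qed.

Lemma neg_set0 {E} (B : (E -> Prop) -> Prop) tau :
  sigma_algebra B -> sigma_maxitive B tau -> negligible B tau set0.
Proof.
  intros [H0 _] [Ht _]. exists set0. split; auto. split; auto. intros x h; exact h.
Qed.

Lemma neg_transfer {E} (B : (E -> Prop) -> Prop) mu nu N :
  (forall A, B A -> (mu A = ezero <-> nu A = ezero)) ->
  negligible B mu N -> negligible B nu N.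
Proof.
  intros H [C [a [b c]]]. exists C. split; auto. split; auto. apply H; auto.
Qed.

Lemma sp_transfer {E} (B : (E -> Prop) -> Prop) mu nu :
  (forall A, B A -> (mu A = ezero <-> nu A = ezero)) ->
  sigma_principal B mu -> sigma_principal B nu.
Proof.
  intros H Hp I HI. destruct (Hp I HI) as [L [HL HS]]. exists L. split; auto.
  intros S HS'. apply (neg_transfer B mu); auto.
Qed.

Lemma epsum_zero f n : (forall k, f k = ezero) -> epsum f n = ezero.
Proof.
  intros H. induction n; simpl; auto. rewrite IHn, H. unfold ezero; simpl. f_equal. lra.
Qed.

Lemma eadd_inf a : eadd a EInf = EInf.
Proof. destruct a; reflexivity. Qed.

Lemma p1_p4 {E} (B : (E -> Prop) -> Prop) tau :
  sigma_algebra B -> sigma_maxitive B tau ->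
  (sigma_principal B tau <->
     exists m : (E -> Prop) -> ereal,
       sigma_additive B m /\ sigma_principal B m /\
       forall A, B A -> (m A = ezero <-> tau A = ezero)).
Proof.
  intros HB Ht. split.
  - intros Hp.
    set (m := fun A => if excluded_middle_informative (tau A = ezero) then ezero else EInf).
    assert (Hm : forall A, m A = ezero <-> tau A = ezero).
    { intro A. unfold m. destruct (excluded_middle_informative (tau A = ezero)); split; auto.
      intro h; discriminate h. intro h; contradiction. }
    exists m. split; [|split].
    + split; [|split].
      * apply Hm. apply Ht.
      * intros A _. unfold m. destruct (excluded_middle_informative _); simpl; auto. lra.
      * intros F HF _. destruct Ht as [_ [Hnn Hs]]. specialize (Hs F HF).
        destruct (classic (tau (bigcup F) = ezero)) as [h0|h0].
        -- assert (Hz : forall n, m (F n) = ezero).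
           { intro n. apply Hm. apply (esup_le _ _ n Hs h0). intro k. apply Hnn. auto. }
           replace (m (bigcup F)) with ezero by (symmetry; apply Hm; auto).
           split.
           ++ intro n. rewrite epsum_zero; auto. simpl. lra.
           ++ intros u Hu. specialize (Hu 0%nat). simpl in Hu. exact Hu.
        -- assert (Hn : exists n, tau (F n) <> ezero).
           { apply NNPP. intro hn. apply h0. apply (esup_zero _ _ Hs). intro n.
             apply NNPP. intro h. apply hn. exists n. exact h. }
           destruct Hn as [n Hn].
           assert (Hmi : forall A, tau A <> ezero -> m A = EInf).
           { intros A hA. unfold m. destruct (excluded_middle_informative _); auto. contradiction. }
           rewrite (Hmi _ h0). split.
           ++ intro k. destruct (epsum _ k); simpl; auto.
           ++ intros u Hu. specialize (Hu (S n)). simpl in Hu. rewrite (Hmi _ Hn), eadd_inf in Hu.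
              exact Hu.
    + apply (sp_transfer B tau); auto. intros A _. split; apply Hm.
    + intros A _. apply Hm.
  - intros [m [_ [Hp Heq]]]. apply (sp_transfer B m); auto.
Qed.

Lemma p1_p2 {E} (B : (E -> Prop) -> Prop) tau :
  sigma_algebra B -> sigma_maxitive B tau -> sigma_principal B tau -> ccc B tau.
Proof.
  intros HB Ht Hp Fam HF Hd.
  destruct (classic (exists F0, Fam F0)) as [[F0 HF0]|hne].
  2:{ exists (fun _ => set0). intros A HA. exfalso. apply hne. exists A. exact HA. }
  set (I := fun A => B A /\ exists g : nat -> E -> Prop, (forall n, Fam (g n)) /\ subset A (bigcup g)).
  assert (HI : sigma_ideal B I).
  { split; [|split; [|split]].
    - intros A [h _]. exact h.
    - exists set0. split; [apply HB|]. exists (fun _ => F0). split; auto. intros x h. destruct h.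
    - intros F HFn. split.
      + apply HB. intro n. apply HFn.
      + destruct (@cchoice _ (fun n (g : nat -> E -> Prop) => (forall k, Fam (g k)) /\ subset (F n) (bigcup g))) as [G HG].
        { intro n. apply HFn. }
        exists (fun m => let (k, j) := of_nat m in G k j). split.
        * intro m. destruct (of_nat m) as [k j]. apply HG.
        * intros x [k hx]. destruct (proj2 (HG k) x hx) as [j hj]. exists (to_nat (k, j)).
          rewrite cancel_of_to. exact hj.
    - intros A C HA HAC [_ [g [h1 h2]]]. split; auto. exists g. split; auto.
      intros x hx. apply h2, HAC, hx. }
  destruct (Hp I HI) as [L [[_ [g [Hg HL]]] HS]].
  exists g. intros F HFF.
  apply NNPP. intro hn.
  assert (HFI : I F). { split. apply (HF F HFF). exists (fun _ => F). split; auto. intros x h; exists 0%nat; exact h. }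
  apply (proj2 (HF F HFF)). eapply neg_sub; [|exact (HS F HFI)].
  intros x hx. split; auto. intro hL. destruct (HL x hL) as [n hgn].
  apply (Hd F (g n) HFF (Hg n)) with x.
  - intro e. apply hn. exists n. symmetry; exact e.
  - split; auto.
Qed.

Lemma p2_p1 {E} (B : (E -> Prop) -> Prop) tau :
  sigma_algebra B -> sigma_maxitive B tau -> ccc B tau -> sigma_principal B tau.
Proof.
  intros HB Ht Hc I [HIB [[A0 HA0] [HIu HId]]].
  assert (HI0 : I set0).
  { apply (HId set0 A0). apply HB. intros x h; destruct h. exact HA0. }
  set (P := fun M : (E -> Prop) -> Prop =>
    (forall A, M A -> I A /\ ~ negligible B tau A) /\
    (forall A C, M A -> M C -> A <> C -> forall x, ~ (A x /\ C x))).
  destruct (@myZorn _ P) as [M [[HM1 HM2] Hmax]].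
  { intros F HF Htot. split.
    - intros A [X [FX XA]]. apply (HF X FX). exact XA.
    - intros A C [X [FX XA]] [Y [FY YC]].
      destruct (Htot X Y FX FY) as [h|h].
      + apply (proj2 (HF Y FY)); auto.
      + apply (proj2 (HF X FX)); auto. }
  destruct (Hc M) as [g Hg].
  { intros A HA. split. apply HIB. apply (HM1 A HA). apply (HM1 A HA). }
  { exact HM2. }
  set (h := fun n => if excluded_middle_informative (M (g n)) then g n else set0).
  assert (Hh : forall n, I (h n)).
  { intro n. unfold h. destruct (excluded_middle_informative _); auto. apply HM1; auto. }
  exists (bigcup h). split. apply HIu. exact Hh.
  intros S HS. apply NNPP. intro hn.
  set (D := fun x => S x /\ ~ bigcup h x).
  assert (HD : I D).
  { apply (HId D S). apply B_diff; [exact HB | apply HIB; exact HS | apply HIB, HIu; exact Hh]. intros x [a _]; exact a. exact HS. }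
  assert (HDM : ~ M D).
  { intro hm. apply hn. apply (neg_sub _ _ _ set0); [|apply neg_set0; auto].
    intros x [hs hnh]. destruct (Hg D hm) as [n hgn].
    apply hnh. exists n. unfold h. destruct (excluded_middle_informative _) as [_|ne].
    rewrite hgn. split; auto. exfalso; apply ne; rewrite hgn; exact hm. }
  apply (Hmax (fun X => M X \/ X = D)).
  - intros X hX. left. exact hX.
  - intro hs. apply HDM. apply hs. right; reflexivity.
  - split.
    + intros A [hA|hA]. apply HM1; exact hA. subst A. split; auto.
    + assert (key : forall A, M A -> forall x, ~ (A x /\ D x)).
      { intros A hA x [ax [_ dx]]. destruct (Hg A hA) as [n hgn]. apply dx. exists n.
        unfold h. destruct (excluded_middle_informative _) as [_|ne].
        rewrite hgn; exact ax. apply ne. rewrite hgn. exact hA. }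
      intros A C [hA|hA] [hC|hC] hAC x.
      * apply HM2; auto.
      * subst C. apply key; auto.
      * subst A. intros [a b]. apply (key C hC x). auto.
      * subst. contradiction.
Qed.

Definition mkc {E} (B : (E -> Prop) -> Prop) tau A (HA : B A) : quot B tau :=
  exist _ (tcls B tau A) (ex_intro _ A (conj HA eq_refl)).

Lemma mem_self {E} (B : (E -> Prop) -> Prop) tau A (HA : B A) :
  sigma_algebra B -> sigma_maxitive B tau -> proj1_sig (mkc B tau A HA) A.
Proof.
  intros HB Ht. simpl. split; auto. exists set0. split. apply neg_set0; auto. tauto.
Qed.

Lemma mem_B {E} (B : (E -> Prop) -> Prop) tau (p : quot B tau) A :
  proj1_sig p A -> B A.
Proof. intro h. destruct p as [P [A0 [HA0 e]]]. simpl in h. subst P. destruct h as [h _]. exact h. Qed.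

Lemma mem_any {E} (B : (E -> Prop) -> Prop) tau (p : quot B tau) :
  sigma_algebra B -> sigma_maxitive B tau -> exists A, proj1_sig p A.
Proof.
  intros HB Ht. destruct p as [P [A0 [HA0 e]]]. simpl. subst P. exists A0. split; auto.
  exists set0. split. apply neg_set0; auto. tauto.
Qed.

Lemma mem_neg {E} (B : (E -> Prop) -> Prop) tau (p : quot B tau) A A' :
  sigma_algebra B -> sigma_maxitive B tau ->
  proj1_sig p A -> proj1_sig p A' -> negligible B tau (fun x => A x /\ ~ A' x).
Proof.
  intros HB Ht. destruct p as [P [A0 [HA0 e]]]. simpl. subst P.
  intros [_ [N1 [hN1 e1]]] [_ [N2 [hN2 e2]]].
  apply (neg_sub _ _ _ (fun x => N1 x \/ N2 x)); [|apply neg_union; auto].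
  intros x [ax nax]. destruct (proj2 (e1 x) (or_introl ax)) as [a0|n1]; auto.
  destruct (proj1 (e2 x) (or_introl a0)) as [a'|n2]; auto. contradiction.
Qed.

Lemma qle_neg {E} (B : (E -> Prop) -> Prop) tau (p q : quot B tau) A C :
  sigma_algebra B -> sigma_maxitive B tau ->
  qle p q -> proj1_sig p A -> proj1_sig q C -> negligible B tau (fun x => A x /\ ~ C x).
Proof.
  intros HB Ht [A1 [C1 [h1 [h2 [N [hN hs]]]]]] hA hC.
  pose proof (mem_neg B tau p A A1 HB Ht hA h1) as n1.
  pose proof (mem_neg B tau q C1 C HB Ht h2 hC) as n2.
  apply (neg_sub _ _ _ (fun x => (A x /\ ~ A1 x) \/ (N x \/ (C1 x /\ ~ C x))));
    [|apply neg_union; auto; apply neg_union; auto].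
  intros x [ax ncx]. destruct (classic (A1 x)) as [a1|na1]; auto.
  destruct (hs x a1) as [c1|nx]; auto.
Qed.

Lemma qle_intro {E} (B : (E -> Prop) -> Prop) tau (p q : quot B tau) A C N :
  proj1_sig p A -> proj1_sig q C -> negligible B tau N ->
  (forall x, A x -> C x \/ N x) -> qle p q.
Proof. intros. exists A, C. repeat split; auto. exists N. auto. Qed.

Lemma qle_intro0 {E} (B : (E -> Prop) -> Prop) tau (p q : quot B tau) A C :
  sigma_algebra B -> sigma_maxitive B tau ->
  proj1_sig p A -> proj1_sig q C -> negligible B tau (fun x => A x /\ ~ C x) -> qle p q.
Proof.
  intros HB Ht hA hC hN. apply (qle_intro _ _ _ _ A C _ hA hC hN).
  intros x ax. destruct (classic (C x)); auto.
Qed.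

Lemma p1_p3 {E} (B : (E -> Prop) -> Prop) tau :
  sigma_algebra B -> sigma_maxitive B tau ->
  sigma_principal B tau -> quot_sigma_principal B tau.
Proof.
  intros HB Ht Hp I [[p0 Hp0] [HId HIl]].
  set (I' := fun A => B A /\ exists p, I p /\ proj1_sig p A).
  assert (Hcls : forall A (HA : B A), I' A -> I (mkc B tau A HA)).
  { intros A HA [_ [p [Ip pA]]]. apply (HId _ p); auto.
    apply (qle_intro0 _ _ _ _ A A HB Ht); auto. apply mem_self; auto.
    apply (neg_sub _ _ _ set0). intros x [a b]; contradiction. apply neg_set0; auto. }
  assert (HI' : sigma_ideal B I').
  { split; [|split; [|split]].
    - intros A [h _]; exact h.
    - destruct (mem_any B tau p0 HB Ht) as [A hA]. exists A. split. apply (mem_B _ _ p0 _ hA).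
      exists p0; auto.
    - intros F HF.
      assert (BF : forall n, B (F n)) by (intro n; apply HF).
      assert (BU : B (bigcup F)) by (apply HB; exact BF).
      split; auto. exists (mkc B tau _ BU). split; [|apply mem_self; auto].
      apply (HIl (fun n => mkc B tau _ (BF n))).
      + intro n. apply Hcls. apply HF.
      + split.
        * intro n. apply (qle_intro0 _ _ _ _ (F n) (bigcup F) HB Ht); try apply mem_self; auto.
          apply (neg_sub _ _ _ set0). intros x [a b]. apply b. exists n; exact a. apply neg_set0; auto.
        * intros u Hu. destruct (mem_any B tau u HB Ht) as [C hC].
          apply (qle_intro0 _ _ _ _ (bigcup F) C HB Ht); try apply mem_self; auto.
          apply (neg_sub _ _ _ (bigcup (fun n x => F n x /\ ~ C x))).
          -- intros x [[n a] b]. exists n. auto.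
          -- apply neg_bigcup; auto. intro n. apply (qle_neg _ _ _ _ _ _ HB Ht (Hu n)); auto.
             apply mem_self; auto.
    - intros A C HA HAC [BC [p [Ip pC]]]. split; auto. exists (mkc B tau A HA). split; [|apply mem_self; auto].
      apply (HId _ p); auto. apply (qle_intro _ _ _ _ A C set0); auto. apply mem_self; auto.
      apply neg_set0; auto. }
  destruct (Hp I' HI') as [L [HL HS]].
  exists (mkc B tau L (proj1 HL)). intro x. split.
  - intro Ix. destruct (mem_any B tau x HB Ht) as [A hA].
    apply (qle_intro0 _ _ _ _ A L HB Ht); auto. apply mem_self; auto.
    apply HS. split. apply (mem_B _ _ x _ hA). exists x; auto.
  - intro hx. destruct HL as [BL [p [Ip pL]]]. apply (HId _ p); auto.
    destruct (mem_any B tau x HB Ht) as [A hA].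
    apply (qle_intro0 _ _ _ _ A L HB Ht); auto.
    apply (qle_neg _ _ _ _ _ _ HB Ht hx); auto. apply mem_self; auto.
Qed.

Lemma p3_p1 {E} (B : (E -> Prop) -> Prop) tau :
  sigma_algebra B -> sigma_maxitive B tau ->
  quot_sigma_principal B tau -> sigma_principal B tau.
Proof.
  intros HB Ht Hq I [HIB [[A0 HA0] [HIu HId]]].
  set (J := fun p : quot B tau => exists A C, proj1_sig p A /\ I C /\
              negligible B tau (fun x => A x /\ ~ C x)).
  assert (Jcls : forall S (HS : I S), J (mkc B tau S (HIB S HS))).
  { intros S HS. exists S, S. split. apply mem_self; auto. split; auto.
    apply (neg_sub _ _ _ set0). intros x [a b]; contradiction. apply neg_set0; auto. }
  assert (HJ : order_sigma_ideal (@qle E B tau) J).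
  { split; [|split].
    - exists (mkc B tau A0 (HIB A0 HA0)). apply Jcls.
    - intros x y hxy [A' [D [hA' [ID hn]]]].
      destruct (mem_any B tau x HB Ht) as [X0 hX0].
      exists X0, D. split; auto. split; auto.
      pose proof (qle_neg _ _ _ _ _ _ HB Ht hxy hX0 hA') as n1.
      apply (neg_sub _ _ _ (fun x => (X0 x /\ ~ A' x) \/ (A' x /\ ~ D x))); [|apply neg_union; auto].
      intros z [a b]. destruct (classic (A' z)); auto.
    - intros f s Hf [Hub Hlub].
      destruct (@cchoice _ (fun n (C : E -> Prop) => I C /\ exists A, proj1_sig (f n) A /\
                  negligible B tau (fun x => A x /\ ~ C x))) as [Cs HCs].
      { intro n. destruct (Hf n) as [A [C [a [b c]]]]. exists C. split; auto. exists A; auto. }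
      assert (IU : I (bigcup Cs)) by (apply HIu; intro n; apply HCs).
      assert (Hsu : qle s (mkc B tau _ (HIB _ IU))).
      { apply Hlub. intro n. destruct (HCs n) as [_ [A [hA hn]]].
        apply (qle_intro _ _ _ _ A (bigcup Cs) (fun x => A x /\ ~ Cs n x) hA); [apply mem_self; auto|exact hn|].
        intros x ax. destruct (classic (Cs n x)); [left; exists n; auto|right; auto]. }
      destruct (mem_any B tau s HB Ht) as [S0 hS0].
      exists S0, (bigcup Cs). split; auto. split; auto.
      apply (qle_neg _ _ _ _ _ _ HB Ht Hsu); auto. apply mem_self; auto. }
  destruct (Hq J HJ) as [l Hl].
  destruct (mem_any B tau l HB Ht) as [L0 hL0].
  assert (Jl : J l). { apply Hl. apply (qle_intro0 _ _ _ _ L0 L0 HB Ht); auto.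
    apply (neg_sub _ _ _ set0). intros x [a b]; contradiction. apply neg_set0; auto. }
  destruct Jl as [A [C [hA [IC hAC]]]].
  exists C. split; auto. intros S HS.
  pose proof (proj1 (Hl _) (Jcls S HS)) as hq.
  pose proof (qle_neg _ _ _ _ _ _ HB Ht hq (mem_self B tau S (HIB S HS) HB Ht) hL0) as n1.
  pose proof (mem_neg B tau l L0 A HB Ht hL0 hA) as n2.
  apply (neg_sub _ _ _ (fun x => (S x /\ ~ L0 x) \/ ((L0 x /\ ~ A x) \/ (A x /\ ~ C x))));
    [|apply neg_union; auto; apply neg_union; auto].
  intros x [a b]. destruct (classic (L0 x)); auto. destruct (classic (A x)); auto.
Qed.

Theorem mainTheorem5 (E : Type) (HE : inhabited E)
  (B : (E -> Prop) -> Prop) (tau : (E -> Prop) -> ereal)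
  (HB : sigma_algebra B) (Htau : sigma_maxitive B tau) :
  (sigma_principal B tau <-> ccc B tau) /\
  (ccc B tau <-> quot_sigma_principal B tau) /\
  (quot_sigma_principal B tau <->
     exists m : (E -> Prop) -> ereal,
       sigma_additive B m /\ sigma_principal B m /\
       forall A, B A -> (m A = ezero <-> tau A = ezero)).
Proof.
  pose proof (p1_p2 B tau HB Htau) as a.
  pose proof (p2_p1 B tau HB Htau) as b.
  pose proof (p1_p3 B tau HB Htau) as c.
  pose proof (p3_p1 B tau HB Htau) as d.
  pose proof (p1_p4 B tau HB Htau) as e.
  split; [|split]; split; intro h.
  - auto.
  - auto.
  - auto.
  - auto.
  - apply e; auto.
  - apply c, e; auto.
Qed.
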